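(* Any sequential MTTKRP algorithm, executed in the two-level memory model with fast memory of size $M$, performs at least \[ \frac{1}{3^{2-1/N}}\,\frac{N I R}{M^{1-1/N}} - M \] loads and stores.
   Context: MTTKRP: Fix integers $N\ge 2$, $I_1,\dots,I_N\ge1$, $R\ge1$, and a mode $n\in[N]$; let $I=I_1I_2\cdots I_N$. Values come from an arbitrary nonempty set equipped with two binary operations written $+$ and $\cdot$ (no algebraic laws assumed). Inputs are an $N$-way tensor $\mathcal{X}$ of dimensions $I_1\times\cdots\times I_N$ and matrices $A^{(k)}$ of size $I_k\times R$ for $k\in[N]\setminus\{n\}$; the output is the $I_n\times R$ matrix $B^{(n)}$ with $B^{(n)}(i_n,r)=\sum \mathcal{X}(i_1,\dots,i_N)\prod_{k\ne n}A^{(k)}(i_k,r)$, the sum over all $(i_1,\dots,i_N)$ with $n$-th entry $i_n$. An MTTKRP algorithm must, for each point $(i_1,\dots,i_N,r)$ of the iteration space $[I_1]\times\cdots\times[I_N]\times[R]$ (of size $IR$), perform one atomic $N$-ary multiply of $\mathcal{X}(i_1,\dots,i_N)$ and the $A^{(k)}(i_k,r)$, $k\neq n$, and accumulate these products into $B^{(n)}(i_n,r)$ by binary additions. Sequential model: one processor, a fast memory holding at most $M$ values and an unbounded slow memory; arithmetic operands and results must reside in fast memory; communication consists of loads (copy a value from slow to fast memory) and stores (fast to slow); inputs start and outputs end in slow memory. *)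

(* Defs.v *)
From Stdlib Require Import Arith Bool List Permutation Reals.
Import ListNotations.

(* Symbolic values.  Since no algebraic law is assumed on (+, .), we take  *)
(* the free (term) model: every value is a syntactic term over the inputs. *)
(* All indices are 0-based.                                                 *)
Inductive term : Type :=
  | XLeaf (i : list nat)
  | ALeaf (k j r : nat)             (* A^(k)(j, r)                  *)
  | TMul  (ts : list term)          (* atomic multi-ary multiply    *)
  | TAdd  (t1 t2 : term).

(* Slow-memory addresses: inputs, outputs B(j,r), and unbounded scratch. *)
Inductive addr : Type :=
  | AX (i : list nat)
  | AA (k j r : nat)
  | AB (j r : nat)
  | AS (s : nat).

(* Instructions of the sequential two-level machine.  Fast memory has M slots
   0..M-1 (so it holds at most M values); slow memory is unbounded. *)
Inductive instr : Type :=
  | ILoad  (a : addr) (d : nat)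
  | IStore (s : nat) (a : addr)
  | IMul   (ss : list nat) (d : nat)
  | IAdd   (s1 s2 : nat) (d : nat).

Definition fastmem := nat -> option term.
Definition slowmem := addr -> option term.

Definition addr_eq_dec (a b : addr) : {a = b} + {a <> b}.
Proof. decide equality; try apply Nat.eq_dec; apply list_eq_dec, Nat.eq_dec. Defined.

Definition upd_fast (f : fastmem) (d : nat) (v : term) : fastmem :=
  fun x => if Nat.eq_dec x d then Some v else f x.
Definition upd_slow (g : slowmem) (a : addr) (v : term) : slowmem :=
  fun x => if addr_eq_dec x a then Some v else g x.

Fixpoint read_slots (f : fastmem) (ss : list nat) : option (list term) :=
  match ss with
  | [] => Some []
  | s :: ss' =>
      match f s, read_slots f ss' with
      | Some v, Some vs => Some (v :: vs)
      | _, _ => None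
      end
  end.

Definition step (M : nat) (st : fastmem * slowmem) (c : instr)
  : option (fastmem * slowmem * option (list term)) :=
  let (f, g) := st in
  match c with
  | ILoad a d =>
      if d <? M then
        match g a with Some v => Some (upd_fast f d v, g, None) | None => None end
      else None
  | IStore s a =>
      match f s with Some v => Some (f, upd_slow g a v, None) | None => None end
  | IMul ss d =>
      if d <? M then
        match read_slots f ss with
        | Some vs => Some (upd_fast f d (TMul vs), g, Some vs)
        | None => None
        end
      else None
  | IAdd s1 s2 d =>
      if d <? M then
        match f s1, f s2 with
        | Some v1, Some v2 => Some (upd_fast f d (TAdd v1 v2), g, None)
        | _, _ => None
        end
      else None
  end.

Fixpoint run (M : nat) (st : fastmem * slowmem) (P : list instr)
  : option (fastmem * slowmem * list (list term)) :=
  match P with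
  | [] => Some (st, [])
  | c :: P' =>
      match step M st c with
      | None => None
      | Some (st', om) =>
          match run M st' P' with
          | None => None
          | Some (st'', ms) =>
              Some (st'', match om with Some m => m :: ms | None => ms end)
          end
      end
  end.

Definition is_comm (c : instr) : bool :=
  match c with ILoad _ _ | IStore _ _ => true | _ => false end.
Definition comm_cost (P : list instr) : nat := length (filter is_comm P).

(* The MTTKRP problem: dims Is = [I_1;...;I_N] (N = length Is), mode n      *)
(* (0-based, n < N), rank Rk.                                               *)
Definition prodn (l : list nat) : nat := fold_right Nat.mul 1 l.

Fixpoint tuples (Is : list nat) : list (list nat) :=
  match Is with
  | [] => [[]]
  | d :: ds => flat_map (fun x => map (cons x) (tuples ds)) (seq 0 d)
  end.

Definition valid_index (Is i : list nat) : bool :=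
  (length i =? length Is) &&
  forallb (fun k => nth k i 0 <? nth k Is 0) (seq 0 (length Is)).

Definition points (Is : list nat) (Rk : nat) : list (list nat * nat) :=
  flat_map (fun i => map (fun r => (i, r)) (seq 0 Rk)) (tuples Is).

Definition points_at (Is : list nat) (n Rk j r : nat) : list (list nat * nat) :=
  filter (fun p => (nth n (fst p) 0 =? j) && (snd p =? r)) (points Is Rk).

Definition operands (Is : list nat) (n : nat) (p : list nat * nat) : list term :=
  XLeaf (fst p) ::
  map (fun k => ALeaf k (nth k (fst p) 0) (snd p))
      (filter (fun k => negb (k =? n)) (seq 0 (length Is))).

Definition is_product (Is : list nat) (n : nat) (p : list nat * nat) (t : term)
  : Prop :=
  exists ts, t = TMul ts /\ Permutation ts (operands Is n p).

Fixpoint summands (t : term) : list term :=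
  match t with
  | TAdd a b => summands a ++ summands b
  | _ => [t]
  end.

Definition sum_of_products (Is : list nat) (n : nat)
    (ps : list (list nat * nat)) (t : term) : Prop :=
  exists qs, Permutation qs ps /\ Forall2 (is_product Is n) qs (summands t).

Definition init_slow (Is : list nat) (n Rk : nat) : slowmem :=
  fun a =>
    match a with
    | AX i => if valid_index Is i then Some (XLeaf i) else None
    | AA k j r =>
        if (k <? length Is) && negb (k =? n) && (j <? nth k Is 0) && (r <? Rk)
        then Some (ALeaf k j r) else None
    | _ => None
    end.

Definition init_fast : fastmem := fun _ => None.

Definition is_mttkrp_alg (Is : list nat) (n Rk M : nat) (P : list instr) : Prop :=
  exists f g ms,
    run M (init_fast, init_slow Is n Rk) P = Some (f, g, ms) /\
    (exists qs, Permutation qs (points Is Rk) /\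
                Forall2 (fun q m => Permutation m (operands Is n q)) qs ms) /\
    (forall j r, j < nth n Is 0 -> r < Rk ->
       exists t, g (AB j r) = Some t /\ sum_of_products Is n (points_at Is n Rk j r) t).

(* Main.v *)
Require Import Defs.
From Stdlib Require Import Arith List Reals Lia Lra Permutation ClassicalEpsilon.
Import ListNotations.

Definition decP (P : Prop) : bool := if excluded_middle_informative P then true else false.
Lemma decP_spec (P : Prop) : decP P = true <-> P.
Proof. unfold decP; destruct (excluded_middle_informative P); split; intros; try easy. Qed.

Lemma decP_true (P : Prop) : decP P = true -> P.
Proof. apply decP_spec. Qed.

Lemma NoDup_flat_map' {A B} (f : A -> list B) (l : list A) :
  NoDup l -> (forall x, In x l -> NoDup (f x)) ->
  (forall x y z, In x l -> In y l -> In z (f x) -> In z (f y) -> x = y) ->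
  NoDup (flat_map f l).
Proof.
  induction l as [|a l IH]; simpl; intros Hl Hf Hd; [constructor|].
  inversion Hl; subst. apply NoDup_app; [auto|apply IH; auto; intros; eapply Hd; eauto|].
  intros z Hz Hz2. apply in_flat_map in Hz2 as [y [Hy Hzy]].
  assert (a = y) by (apply (Hd a y z); auto). subst; contradiction.
Qed.

Lemma NoDup_map_inj {A B} (f : A -> B) l : NoDup l -> (forall x y, f x = f y -> x = y) -> NoDup (map f l).
Proof. induction l; simpl; intros H Hi; constructor; inversion H; subst; auto.
  intro Hin. apply in_map_iff in Hin as [y [Hy Hy']]. apply Hi in Hy; subst; auto. Qed.

Lemma Forall2_nth_iff {A B} (P : A -> B -> Prop) l1 l2 d1 d2 :
  Forall2 P l1 l2 <-> length l1 = length l2 /\ forall k, k < length l1 -> P (nth k l1 d1) (nth k l2 d2).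
Proof.
  revert l2; induction l1 as [|a l1 IH]; intros [|b l2]; simpl.
  - split; [intros; split; [auto|intros; lia]|constructor].
  - split; [intros H; inversion H|intros [H _]; discriminate].
  - split; [intros H; inversion H|intros [H _]; discriminate].
  - split.
    + intros H; inversion H; subst. apply IH in H5 as [H1 H2]. split; [lia|].
      intros [|k] Hk; simpl; auto. apply H2; lia.
    + intros [H1 H2]. constructor. apply (H2 0); lia.
      apply IH. split; [lia|]. intros k Hk. apply (H2 (S k)); lia.
Qed.

Fixpoint prodlist (Ss : list (list nat)) : list (list nat) :=
  match Ss with
  | [] => [[]]
  | Sx :: Ss' => flat_map (fun x => map (cons x) (prodlist Ss')) Sx
  end.

Lemma tuples_prodlist Is : tuples Is = prodlist (map (seq 0) Is).
Proof. induction Is; simpl; auto. rewrite IHIs; auto. Qed.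

Lemma In_prodlist Ss i : In i (prodlist Ss) <-> Forall2 (fun x S => In x S) i Ss.
Proof.
  revert i; induction Ss as [|Sx Ss IH]; intros i; simpl.
  - split. intros [<-|[]]; constructor. intros H; inversion H; auto.
  - rewrite in_flat_map. split.
    + intros [x [Hx Hi]]. apply in_map_iff in Hi as [j [<- Hj]]. constructor; auto. apply IH; auto.
    + intros H; inversion H; subst. exists x; split; auto. apply in_map. apply IH; auto.
Qed.

Lemma length_prodlist Ss : length (prodlist Ss) = prodn (map (@length nat) Ss).
Proof.
  induction Ss as [|Sx Ss IH]; simpl; auto.
  rewrite (flat_map_constant_length (c := length (prodlist Ss))).
  - rewrite IH; auto.
  - intros; apply length_map.
Qed.

Lemma NoDup_prodlist Ss : Forall (@NoDup nat) Ss -> NoDup (prodlist Ss).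
Proof.
  induction Ss as [|Sx Ss IH]; simpl; intros H. repeat constructor; auto.
  inversion H; subst. apply NoDup_flat_map'; auto.
  - intros; apply NoDup_map_inj; auto. intros ? ? E; inversion E; auto.
  - intros x y z _ _ Hx Hy. apply in_map_iff in Hx as [a [<- _]].
    apply in_map_iff in Hy as [b [E _]]. inversion E; auto.
Qed.

Lemma NoDup_tuples Is : NoDup (tuples Is).
Proof.
  rewrite tuples_prodlist. apply NoDup_prodlist. induction Is; simpl; constructor; auto. apply seq_NoDup.
Qed.

Lemma length_tuples Is : length (tuples Is) = prodn Is.
Proof.
  rewrite tuples_prodlist, length_prodlist. rewrite map_map.
  induction Is; simpl; auto. rewrite length_seq, IHIs; auto.
Qed.

Lemma In_tuples Is i : In i (tuples Is) <-> length i = length Is /\ forall k, k < length Is -> nth k i 0 < nth k Is 0.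
Proof.
  rewrite tuples_prodlist, In_prodlist, (Forall2_nth_iff _ _ _ 0 []).
  rewrite length_map. split; intros [H1 H2]; split; auto; intros k Hk.
  - specialize (H2 k ltac:(lia)).
    rewrite (nth_indep _ [] (seq 0 0)) in H2 by (rewrite length_map; lia).
    rewrite map_nth in H2. apply in_seq in H2. lia.
  - rewrite (nth_indep _ [] (seq 0 0)) by (rewrite length_map; lia).
    rewrite map_nth. apply in_seq. specialize (H2 k ltac:(lia)). lia.
Qed.

Lemma In_points Is Rk p : In p (points Is Rk) <-> In (fst p) (tuples Is) /\ snd p < Rk.
Proof.
  unfold points. rewrite in_flat_map. split.
  - intros [i [Hi Hp]]. apply in_map_iff in Hp as [r [<- Hr]]. apply in_seq in Hr. simpl; split; auto; lia.
  - destruct p as [i r]; simpl; intros [H1 H2]. exists i; split; auto. apply in_map. apply in_seq; lia.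
Qed.

Lemma NoDup_points Is Rk : NoDup (points Is Rk).
Proof.
  unfold points. apply NoDup_flat_map'. apply NoDup_tuples.
  - intros; apply NoDup_map_inj. apply seq_NoDup. intros ? ? E; inversion E; auto.
  - intros x y z _ _ Hx Hy. apply in_map_iff in Hx as [a [<- _]].
    apply in_map_iff in Hy as [b [E _]]. inversion E; auto.
Qed.

Lemma length_points Is Rk : length (points Is Rk) = prodn Is * Rk.
Proof.
  unfold points. rewrite (flat_map_constant_length (c := Rk)).
  rewrite length_tuples; auto. intros; rewrite length_map, length_seq; auto.
Qed.
Open Scope R_scope.
Lemma exp_bound y m : 0 < m -> 0 <= y -> y <= m * exp (y / m - 1).
Proof.
  intros Hm Hy. pose proof (exp_ineq1_le (y / m - 1)).
  apply Rle_trans with (m * (1 + (y/m - 1))); [|apply Rmult_le_compat_l; lra].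
  right. field. lra.
Qed.

Lemma amgm_aux (m : R) (L : list nat) : 0 < m ->
  INR (prodn L) <= m ^ length L * exp (INR (list_sum L) / m - INR (length L)).
Proof.
  intros Hm. induction L as [|y L IH].
  - simpl. replace (0/m - 0) with 0 by (field; lra). rewrite exp_0. lra.
  - change (prodn (y :: L)) with (y * prodn L)%nat. change (list_sum (y :: L)) with (y + list_sum L)%nat.
    change (length (y :: L)) with (S (length L)).
    rewrite mult_INR, plus_INR, S_INR. simpl pow.
    replace ((INR y + INR (list_sum L)) / m - (INR (length L) + 1))
      with ((INR y / m - 1) + (INR (list_sum L) / m - INR (length L))) by (field; lra).
    rewrite exp_plus.
    pose proof (exp_bound (INR y) m Hm (pos_INR y)).
    replace (m * m ^ length L * (exp (INR y / m - 1) * exp (INR (list_sum L) / m - INR (length L))))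
      with ((m * exp (INR y / m - 1)) * (m ^ length L * exp (INR (list_sum L) / m - INR (length L)))) by ring.
    apply Rmult_le_compat; auto using pos_INR.
Qed.

Lemma list_sum_zero L : list_sum L = 0%nat -> L <> [] -> prodn L = 0%nat.
Proof. destruct L as [|y L]; simpl; intros H H'; [congruence|]. assert (y = 0%nat) by lia. subst; auto. Qed.

Lemma amgm (L : list nat) : L <> [] ->
  INR (prodn L) <= (INR (list_sum L) / INR (length L)) ^ length L.
Proof.
  intros HL. assert (HN : 0 < INR (length L)) by (apply lt_0_INR; destruct L; simpl; [congruence|lia]).
  destruct (Nat.eq_dec (list_sum L) 0) as [E|E].
  - rewrite (list_sum_zero L E HL). simpl. apply pow_le. rewrite E; simpl. unfold Rdiv; lra.
  - assert (Hm : 0 < INR (list_sum L) / INR (length L)).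
    { apply Rdiv_lt_0_compat; auto. apply lt_0_INR; lia. }
    pose proof (amgm_aux _ L Hm).
    replace (INR (list_sum L) / (INR (list_sum L) / INR (length L)) - INR (length L)) with 0 in H
      by (field; split; [lra|]; apply not_0_INR; auto).
    rewrite exp_0, Rmult_1_r in H. auto.
Qed.

Lemma min_bound (u m c : R) (N : nat) : 0 < u -> 0 <= m -> (1 <= N)%nat ->
  c <= u ^ N -> c <= m ^ N -> c <= u ^ (N - 1) * m.
Proof.
  intros Hu Hm HN H1 H2. destruct N as [|N]; [lia|]. replace (S N - 1)%nat with N by lia.
  destruct (Rle_lt_dec u m).
  - simpl in H1. apply Rle_trans with (u * u ^ N); auto. rewrite Rmult_comm.
    apply Rmult_le_compat_l; [apply pow_le; lra|auto].
  - simpl in H2. apply Rle_trans with (m * m ^ N); auto. rewrite (Rmult_comm (u ^ N)).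
    apply Rmult_le_compat_l; auto. apply pow_incr; lra.
Qed.

Lemma rpow_facts (X : R) (N : nat) : 0 < X -> (1 <= N)%nat ->
  let u := Rpower X (/ INR N) in
  0 < u /\ u ^ N = X /\ Rpower X (1 - / INR N) = u ^ (N - 1) /\ Rpower X (2 - / INR N) = u ^ (2 * N - 1).
Proof.
  intros HX HN u. assert (HNr : 0 < INR N) by (apply lt_0_INR; lia).
  assert (Hu : 0 < u) by (unfold u, Rpower; apply exp_pos).
  assert (Hk : forall k : nat, u ^ k = Rpower X (INR k / INR N)).
  { intros k. rewrite <- Rpower_pow by auto. unfold u. rewrite Rpower_mult. f_equal. field; lra. }
  split; auto. split.
  - rewrite Hk. replace (INR N / INR N) with 1 by (field; lra). apply Rpower_1; auto.
  - split; rewrite Hk; f_equal; rewrite minus_INR by lia; rewrite ?mult_INR; simpl; field; lra.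
Qed.

Lemma sum_flat_map_le {A B C} (F : A -> list B) (G : A -> list C) (K : R) (l : list A) :
  (forall x, In x l -> INR (length (F x)) <= K * INR (length (G x))) ->
  INR (length (flat_map F l)) <= K * INR (length (flat_map G l)).
Proof.
  induction l as [|a l IH]; simpl; intros H.
  - lra.
  - rewrite !length_app, !plus_INR. rewrite Rmult_plus_distr_l.
    apply Rplus_le_compat; auto.
Qed.
Close Scope R_scope.


Lemma comb_core (Is : list nat) (n Rk : nat) (V : list (list nat * nat))
  (Lin Lout : list (option term)) (goodR : term -> nat * nat -> Prop) (u : R) :
  (1 <= length Is)%nat -> n < length Is ->
  NoDup V -> incl V (points Is Rk) ->
  (forall w e1 e2, goodR w e1 -> goodR w e2 -> e1 = e2) ->
  (forall k j r e, ~ goodR (ALeaf k j r) e) ->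
  (forall p, In p V ->
     In (Some (XLeaf (fst p))) Lin /\
     (forall k, k < length Is -> k <> n -> In (Some (ALeaf k (nth k (fst p) 0) (snd p))) Lin) /\
     exists w, In (Some w) Lout /\ goodR w (nth n (fst p) 0, snd p)) ->
  (0 < u)%R -> (INR (length Lin) <= u ^ length Is)%R ->
  (INR (length V) <= u ^ (length Is - 1) / INR (length Is) * INR (length Lin + length Lout))%R.
Proof.
  intros HN Hn HV HVp Hfun Hleaf Hcov Hu HLin.
  set (N := length Is) in *.
  set (Sk := fun k r => filter (fun j => decP (exists p, In p V /\ nth k (fst p) 0 = j /\ snd p = r)) (seq 0 (nth k Is 0))).
  set (Vr := fun r => filter (fun i => decP (In (i, r) V)) (tuples Is)).
  set (D := flat_map (fun r => flat_map (fun k => map (fun j => (k, j, r)) (Sk k r)) (seq 0 N)) (seq 0 Rk)).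
  assert (HNr : (0 < INR N)%R) by (apply lt_0_INR; lia).
  assert (H1 : length V <= length (flat_map (fun r => map (fun i => (i, r)) (Vr r)) (seq 0 Rk))).
  { apply NoDup_incl_length; auto. intros [i r] Hp. apply in_flat_map.
    pose proof (HVp _ Hp) as Hp'. apply In_points in Hp' as [Hi Hr]. simpl in *.
    exists r; split; [apply in_seq; lia|]. apply in_map_iff. exists i; split; [reflexivity|]. unfold Vr. apply filter_In; split; auto. apply decP_spec; auto. }
  assert (H2 : length D <= length Lin + length Lout).
  { set (key3 := fun o : option term => match o with
        | Some (ALeaf k j r) => (k, j, r)
        | Some w => (n, fst (epsilon (inhabits (0, 0)) (goodR w)), snd (epsilon (inhabits (0, 0)) (goodR w)))
        | None => (0, 0, 0) end).
    rewrite <- length_app. rewrite <- (length_map key3 (Lin ++ Lout)).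
    apply NoDup_incl_length.
    - unfold D. apply NoDup_flat_map'. apply seq_NoDup.
      + intros r _. apply NoDup_flat_map'. apply seq_NoDup.
        * intros k _. apply NoDup_map_inj. apply NoDup_filter, seq_NoDup. intros ? ? E; inversion E; auto.
        * intros x y z _ _ Hx Hy. apply in_map_iff in Hx as [a [<- _]]. apply in_map_iff in Hy as [b [E _]]. inversion E; auto.
      + intros x y z _ _ Hx Hy. apply in_flat_map in Hx as [k [_ Hx]]. apply in_flat_map in Hy as [k' [_ Hy]].
        apply in_map_iff in Hx as [a [<- _]]. apply in_map_iff in Hy as [b [E _]]. inversion E; auto.
    - intros [[k j] r] Hz. unfold D in Hz. apply in_flat_map in Hz as [r' [_ Hz]].
      apply in_flat_map in Hz as [k' [Hk' Hz]]. apply in_map_iff in Hz as [j' [E Hj']]. inversion E; subst.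
      apply in_seq in Hk'. unfold Sk in Hj'. apply filter_In in Hj' as [_ Hj']. apply decP_true in Hj' as [p [Hp [Hpk Hpr]]].
      destruct (Hcov p Hp) as [_ [HA [w [Hw Hg]]]].
      apply in_map_iff. destruct (Nat.eq_dec k n) as [->|Hkn].
      + exists (Some w). split; [|apply in_or_app; right; auto].
        pose proof (epsilon_spec (inhabits (0,0)) (goodR w) (ex_intro _ _ Hg)) as He.
        pose proof (Hfun _ _ _ Hg He) as Ee.
        destruct w; try (exfalso; eapply Hleaf; eauto; fail); simpl; rewrite <- Ee; simpl; subst; auto.
      + exists (Some (ALeaf k j r)). split; [simpl; auto|]. apply in_or_app; left. subst. apply HA; auto; lia. }
  assert (H3 : forall r, In r (seq 0 Rk) ->
     (INR (length (map (fun i => (i, r)) (Vr r))) <=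
      u ^ (N - 1) / INR N * INR (length (flat_map (fun k => map (fun j => (k, j, r)) (Sk k r)) (seq 0 N))))%R).
  { intros r _. rewrite length_map.
    set (L := map (fun k => length (Sk k r)) (seq 0 N)).
    assert (HL1 : length L = N) by (unfold L; rewrite length_map, length_seq; auto).
    assert (HL2 : list_sum L = length (flat_map (fun k => map (fun j => (k, j, r)) (Sk k r)) (seq 0 N))).
    { rewrite length_flat_map. unfold L. f_equal. apply map_ext. intros; rewrite length_map; auto. }
    assert (Hc1 : length (Vr r) <= length Lin).
    { rewrite <- (length_map (fun i => Some (XLeaf i)) (Vr r)). apply NoDup_incl_length.
      - apply NoDup_map_inj. apply NoDup_filter, NoDup_tuples. intros ? ? E; inversion E; auto.
      - intros o Ho. apply in_map_iff in Ho as [i [<- Hi]]. unfold Vr in Hi. apply filter_In in Hi as [_ Hi].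
        apply decP_true in Hi. apply (Hcov _ Hi). }
    assert (Hc2 : length (Vr r) <= prodn L).
    { unfold L. rewrite <- map_map with (g := @length nat) (f := fun k => Sk k r).
      rewrite <- length_prodlist. apply NoDup_incl_length. apply NoDup_filter, NoDup_tuples.
      intros i Hi. unfold Vr in Hi. apply filter_In in Hi as [Hit Hi]. apply decP_true in Hi.
      apply In_prodlist. apply (Forall2_nth_iff _ _ _ 0 []).
      apply In_tuples in Hit as [Hlen Hlt]. rewrite length_map, length_seq. split; auto.
      intros k Hk. rewrite (nth_indep _ [] ((fun k => Sk k r) 0)) by (rewrite length_map, length_seq; lia).
      rewrite (map_nth (fun k0 => Sk k0 r) (seq 0 N) 0 k), seq_nth by lia. simpl. unfold Sk. apply filter_In. split.
      - apply in_seq. specialize (Hlt k ltac:(lia)). lia.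
      - apply decP_spec. exists (i, r); auto. }
    assert (HLne : L <> []) by (intro E; rewrite E in HL1; simpl in HL1; lia).
    pose proof (amgm L HLne) as Ham. rewrite HL1, HL2 in Ham.
    apply Rle_trans with (u ^ (N - 1) * (INR (length (flat_map (fun k => map (fun j => (k, j, r)) (Sk k r)) (seq 0 N))) / INR N))%R.
    - apply min_bound; auto.
      + unfold Rdiv; apply Rmult_le_pos; [apply pos_INR|left; apply Rinv_0_lt_compat; auto].
      + apply Rle_trans with (INR (length Lin)); auto. apply le_INR; auto.
      + apply Rle_trans with (INR (prodn L)); auto. apply le_INR; auto.
    - right. field. lra. }
  apply Rle_trans with (INR (length (flat_map (fun r => map (fun i => (i, r)) (Vr r)) (seq 0 Rk)))).
  { apply le_INR; auto. }
  apply Rle_trans with (u ^ (N - 1) / INR N * INR (length D))%R.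
  { unfold D. apply sum_flat_map_le. auto. }
  apply Rmult_le_compat_l. unfold Rdiv; apply Rmult_le_pos; [apply pow_le; lra|left; apply Rinv_0_lt_compat; auto].
  apply le_INR; auto.
Qed.
Lemma run_app M st P1 P2 st'' ms :
  run M st (P1 ++ P2) = Some (st'', ms) ->
  exists st' ms1 ms2, run M st P1 = Some (st', ms1) /\ run M st' P2 = Some (st'', ms2) /\ ms = ms1 ++ ms2.
Proof.
  revert st ms; induction P1 as [|c P1 IH]; simpl; intros st ms H.
  - exists st, [], ms; auto.
  - destruct (step M st c) as [[st1 om]|]; [|discriminate].
    destruct (run M st1 (P1 ++ P2)) as [[st2 ms2]|] eqn:E; [|discriminate].
    inversion H; subst. apply IH in E as [st' [ms1 [ms3 [H1 [H2 H3]]]]].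
    exists st', (match om with Some m => m :: ms1 | None => ms1 end), ms3.
    rewrite H1. split; auto. split; auto. subst. destruct om; auto.
Qed.

Lemma read_slots_in f ss vs : read_slots f ss = Some vs -> forall u, In u vs -> exists s, f s = Some u.
Proof.
  revert vs; induction ss as [|s ss IH]; simpl; intros vs H u Hu.
  - inversion H; subst; destruct Hu.
  - destruct (f s) eqn:E1; [|discriminate]. destruct (read_slots f ss) eqn:E2; [|discriminate].
    inversion H; subst. destruct Hu as [<-|Hu]; eauto.
Qed.

Lemma step_cases M f g c st' om :
  step M (f, g) c = Some (st', om) ->
  (exists a d v, c = ILoad a d /\ d < M /\ g a = Some v /\ st' = (upd_fast f d v, g) /\ om = None) \/
  (exists s a v, c = IStore s a /\ f s = Some v /\ st' = (f, upd_slow g a v) /\ om = None) \/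
  (exists ss d vs, c = IMul ss d /\ d < M /\ read_slots f ss = Some vs /\ st' = (upd_fast f d (TMul vs), g) /\ om = Some vs) \/
  (exists s1 s2 d v1 v2, c = IAdd s1 s2 d /\ d < M /\ f s1 = Some v1 /\ f s2 = Some v2 /\
       st' = (upd_fast f d (TAdd v1 v2), g) /\ om = None).
Proof.
  destruct c; simpl; intros H.
  - destruct (d <? M) eqn:Ed; [|discriminate]. destruct (g a) eqn:Ea; [|discriminate].
    inversion H; subst. left. exists a, d, t. apply Nat.ltb_lt in Ed. repeat split; auto.
  - destruct (f s) eqn:Es; [|discriminate]. inversion H; subst. right; left. exists s, a, t; repeat split; auto.
  - destruct (d <? M) eqn:Ed; [|discriminate]. destruct (read_slots f ss) eqn:Er; [|discriminate].
    inversion H; subst. right; right; left. apply Nat.ltb_lt in Ed. exists ss, d, l; repeat split; auto.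
  - destruct (d <? M) eqn:Ed; [|discriminate]. destruct (f s1) eqn:E1; [|discriminate].
    destruct (f s2) eqn:E2; [|discriminate].
    inversion H; subst. right; right; right. apply Nat.ltb_lt in Ed. exists s1, s2, d, t, t0; repeat split; auto.
Qed.

Definition inmem (st : fastmem * slowmem) (w : term) : Prop :=
  (exists s, fst st s = Some w) \/ (exists a, snd st a = Some w).

Lemma run_fast_bound M st P st' ms :
  run M st P = Some (st', ms) -> (forall s, M <= s -> fst st s = None) -> (forall s, M <= s -> fst st' s = None).
Proof.
  revert st ms; induction P as [|c P IH]; simpl; intros [f g] ms H Hb.
  - inversion H; subst; auto.
  - destruct (step M (f,g) c) as [[st1 om]|] eqn:Es; [|discriminate].
    destruct (run M st1 P) as [[st2 ms2]|] eqn:E; [|discriminate]. inversion H; subst.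
    apply (IH st1 ms2 E). apply step_cases in Es.
    simpl in Hb. intros s Hs.
    destruct Es as [[a [d [v [-> [Hd [_ [-> _]]]]]]]|[[s0 [a [v [-> [_ [-> _]]]]]]|[[ss [d [vs [-> [Hd [_ [-> _]]]]]]]|[s1 [s2 [d [v1 [v2 [-> [Hd [_ [_ [-> _]]]]]]]]]]]]];
      simpl; unfold upd_fast; try destruct (Nat.eq_dec s d); try lia; auto.
Qed.

Definition is_leaf (t : term) : Prop := match t with XLeaf _ | ALeaf _ _ _ => True | _ => False end.

Fixpoint nloads (P : list instr) : nat := match P with [] => 0 | ILoad _ _ :: P' => S (nloads P') | _ :: P' => nloads P' end.
Fixpoint nstores (P : list instr) : nat := match P with [] => 0 | IStore _ _ :: P' => S (nstores P') | _ :: P' => nstores P' end.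

Lemma comm_split P : comm_cost P = nloads P + nstores P.
Proof. unfold comm_cost; induction P as [|c P IH]; simpl; auto; destruct c; simpl; lia. Qed.

Lemma comm_cost_app P Q : comm_cost (P ++ Q) = comm_cost P + comm_cost Q.
Proof. unfold comm_cost. rewrite filter_app, length_app; auto. Qed.

Lemma load_lemma M P : forall st st' ms Lin0, run M st P = Some (st', ms) ->
  (forall s u, fst st s = Some u -> is_leaf u -> In (Some u) Lin0) ->
  exists Lin, incl Lin0 Lin /\ length Lin <= length Lin0 + nloads P /\
    forall ts, In ts ms -> forall u, In u ts -> is_leaf u -> In (Some u) Lin.
Proof.
  induction P as [|c P IH]; simpl; intros [f g] st' ms Lin0 H Hinv.
  - inversion H; subst. exists Lin0; split; [apply incl_refl|]; split; [lia|]. intros _ [].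
  - destruct (step M (f,g) c) as [[st1 om]|] eqn:Es; [|discriminate].
    destruct (run M st1 P) as [[st2 ms2]|] eqn:E; [|discriminate]. inversion H; subst.
    apply step_cases in Es. simpl in Hinv.
    destruct Es as [[a [d [v [-> [Hd [Hv [-> ->]]]]]]]|[[s0 [a [v [-> [_ [-> ->]]]]]]|[[ss [d [vs [-> [Hd [Hr [-> ->]]]]]]]|[s1 [s2 [d [v1 [v2 [-> [Hd [_ [_ [-> ->]]]]]]]]]]]]].
    + destruct (IH _ _ _ (Some v :: Lin0) E) as [Lin [H1 [H2 H3]]].
      { simpl; unfold upd_fast; intros s u Hs Hu. destruct (Nat.eq_dec s d); [inversion Hs; subst; auto|right; eauto]. }
      exists Lin; split; [intros x Hx; apply H1; right; auto|]. split; [simpl in H2; lia|auto].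
    + destruct (IH _ _ _ Lin0 E) as [Lin [H1 [H2 H3]]]; [exact Hinv|].
      exists Lin; repeat split; auto.
    + destruct (IH _ _ _ Lin0 E) as [Lin [H1 [H2 H3]]].
      { simpl; unfold upd_fast; intros s u Hs Hu. destruct (Nat.eq_dec s d); [inversion Hs; subst; destruct Hu|eauto]. }
      exists Lin; split; auto. split; [lia|]. intros ts [<-|Hts]; eauto.
      intros u Hu Hl. apply H1. destruct (read_slots_in _ _ _ Hr u Hu) as [s Hs]. eauto.
    + destruct (IH _ _ _ Lin0 E) as [Lin [H1 [H2 H3]]].
      { simpl; unfold upd_fast; intros s u Hs Hu. destruct (Nat.eq_dec s d); [inversion Hs; subst; destruct Hu|eauto]. }
      exists Lin; repeat split; auto.
Qed.

Lemma store_lemma M P : forall st st' ms, run M st P = Some (st', ms) ->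
  exists St, length St <= nstores P /\ forall a w, snd st' a = Some w -> snd st a = Some w \/ In (Some w) St.
Proof.
  induction P as [|c P IH]; simpl; intros [f g] st' ms H.
  - inversion H; subst. exists []; split; auto.
  - destruct (step M (f,g) c) as [[st1 om]|] eqn:Es; [|discriminate].
    destruct (run M st1 P) as [[st2 ms2]|] eqn:E; [|discriminate]. inversion H; subst.
    destruct (IH _ _ _ E) as [St [H1 H2]].
    apply step_cases in Es.
    destruct Es as [[a [d [v [-> [Hd [Hv [-> ->]]]]]]]|[[s0 [a [v [-> [_ [-> ->]]]]]]|[[ss [d [vs [-> [Hd [Hr [-> ->]]]]]]]|[s1 [s2 [d [v1 [v2 [-> [Hd [_ [_ [-> ->]]]]]]]]]]]]];
      simpl in *.
    + exists St; auto.
    + exists (Some v :: St); split; [simpl; lia|]. intros a0 w Hw.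
      destruct (H2 a0 w Hw) as [Hg|Hg]; [|right; right; auto].
      unfold upd_slow in Hg. destruct (addr_eq_dec a0 a); [inversion Hg; subst; right; left; auto|left; auto].
    + exists St; auto.
    + exists St; auto.
Qed.

Definition Inv (st : fastmem * slowmem) (L : list (list term)) : Prop :=
  forall w vs, inmem st w -> In (TMul vs) (summands w) -> In vs L.

Lemma inv_lemma M P : forall st st' ms L, run M st P = Some (st', ms) -> Inv st L -> Inv st' (L ++ ms).
Proof.
  induction P as [|c P IH]; simpl; intros [f g] st' ms L H Hinv.
  - inversion H; subst. rewrite app_nil_r; auto.
  - destruct (step M (f,g) c) as [[st1 om]|] eqn:Es; [|discriminate].
    destruct (run M st1 P) as [[st2 ms2]|] eqn:E; [|discriminate]. inversion H; subst.
    apply step_cases in Es. unfold Inv, inmem in *; simpl in *.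
    destruct Es as [[a [d [v [-> [Hd [Hv [-> ->]]]]]]]|[[s0 [a [v [-> [Hv [-> ->]]]]]]|[[ss [d [vs [-> [Hd [Hr [-> ->]]]]]]]|[s1 [s2 [d [v1 [v2 [-> [Hd [Hv1 [Hv2 [-> ->]]]]]]]]]]]]].
    + apply (IH _ _ _ L E). simpl. intros w vs [[s Hs]|[a0 Ha]] Hin; unfold upd_fast in *.
      * destruct (Nat.eq_dec s d); [inversion Hs; subst|]; eauto.
      * eauto.
    + apply (IH _ _ _ L E). simpl. intros w vs [[s Hs]|[a0 Ha]] Hin; unfold upd_slow in *.
      * eauto.
      * destruct (addr_eq_dec a0 a); [inversion Ha; subst|]; eauto.
    + replace (L ++ vs :: ms2) with ((L ++ [vs]) ++ ms2) by (rewrite <- app_assoc; auto).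
      apply (IH _ _ _ _ E). simpl. intros w vs0 [[s Hs]|[a0 Ha]] Hin; unfold upd_fast in *; apply in_or_app.
      * destruct (Nat.eq_dec s d); [inversion Hs; subst|].
        -- simpl in Hin. destruct Hin as [Hin|[]]. inversion Hin; subst. right; left; auto.
        -- left; eauto.
      * left; eauto.
    + apply (IH _ _ _ L E). simpl. intros w vs [[s Hs]|[a0 Ha]] Hin; unfold upd_fast in *.
      * destruct (Nat.eq_dec s d); [inversion Hs; subst|]; eauto.
        simpl in Hin. apply in_app_or in Hin as [Hin|Hin]; eauto.
      * eauto.
Qed.

Lemma back_lemma M P : forall st st' ms T, run M st P = Some (st', ms) ->
  (forall vs, T = TMul vs -> ~ In vs ms) ->
  forall v, inmem st' v -> In T (summands v) ->
  exists w, inmem st w /\ In T (summands w) /\ incl (summands w) (summands v).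
Proof.
  induction P as [|c P IH]; simpl; intros [f g] st' ms T H HT v Hv HTv.
  - inversion H; subst. exists v; split; auto; split; auto. apply incl_refl.
  - destruct (step M (f,g) c) as [[st1 om]|] eqn:Es; [|discriminate].
    destruct (run M st1 P) as [[st2 ms2]|] eqn:E; [|discriminate]. inversion H; subst.
    destruct (IH _ _ _ T E) with (v := v) as [w1 [Hw1 [HT1 Hi1]]]; auto.
    { intros vs Hvs Hin. apply (HT vs Hvs). destruct om; simpl; auto. }
    apply step_cases in Es. unfold inmem in *; simpl in *.
    destruct Es as [[a [d [v0 [-> [Hd [Hv0 [-> ->]]]]]]]|[[s0 [a [v0 [-> [Hv0 [-> ->]]]]]]|[[ss [d [vs [-> [Hd [Hr [-> ->]]]]]]]|[s1 [s2 [d [v1 [v2 [-> [Hd [Hv1 [Hv2 [-> ->]]]]]]]]]]]]]; simpl in *.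
    + destruct Hw1 as [[s Hs]|[a0 Ha]]; unfold upd_fast in *.
      * destruct (Nat.eq_dec s d); [inversion Hs; subst|]; eauto 7.
      * eauto 7.
    + destruct Hw1 as [[s Hs]|[a0 Ha]]; unfold upd_slow in *.
      * eauto 7.
      * destruct (addr_eq_dec a0 a); [inversion Ha; subst|]; eauto 7.
    + destruct Hw1 as [[s Hs]|[a0 Ha]]; unfold upd_fast in *.
      * destruct (Nat.eq_dec s d); [inversion Hs; subst|]; eauto 7.
        simpl in HT1. destruct HT1 as [HT1|[]]. exfalso; apply (HT vs); auto.
      * eauto 7.
    + destruct Hw1 as [[s Hs]|[a0 Ha]]; unfold upd_fast in *.
      * destruct (Nat.eq_dec s d); [inversion Hs; subst|]; eauto 7.
        simpl in HT1, Hi1. apply in_app_or in HT1 as [HT1|HT1].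
        -- exists v1; split; eauto. split; auto. intros x Hx; apply Hi1, in_or_app; auto.
        -- exists v2; split; eauto. split; auto. intros x Hx; apply Hi1, in_or_app; auto.
      * eauto 7.
Qed.

Lemma run_M0 st P st' ms : run 0 st P = Some (st', ms) -> ms = [].
Proof.
  revert st ms; induction P as [|c P IH]; simpl; intros [f g] ms H.
  - inversion H; auto.
  - destruct (step 0 (f,g) c) as [[st1 om]|] eqn:Es; [|discriminate].
    destruct (run 0 st1 P) as [[st2 ms2]|] eqn:E; [|discriminate]. inversion H; subst.
    apply step_cases in Es.
    destruct Es as [[a [d [v0 [-> [Hd _]]]]]|[[s0 [a [v0 [-> [Hv0 [-> ->]]]]]]|[[ss [d [vs [-> [Hd _]]]]]|[s1 [s2 [d [v1 [v2 [-> [Hd _]]]]]]]]]]; try lia.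
    eauto.
Qed.

Lemma inv_init Is n Rk : Inv (init_fast, init_slow Is n Rk) [].
Proof.
  intros w vs [[s Hs]|[a Ha]] Hin; simpl in *. discriminate.
  destruct a; simpl in Ha.
  - destruct (valid_index Is i); inversion Ha; subst; simpl in Hin; destruct Hin as [H|[]]; discriminate.
  - destruct (((k <? length Is) && negb (k =? n) && (j <? nth k Is 0) && (r <? Rk))%bool); inversion Ha; subst; simpl in Hin; destruct Hin as [H|[]]; discriminate.
  - discriminate.
  - discriminate.
Qed.

Lemma Forall2_in_l {A B} (R0 : A -> B -> Prop) l1 l2 x : Forall2 R0 l1 l2 -> In x l1 -> exists y, In y l2 /\ R0 x y.
Proof. induction 1; simpl; [intros []|intros [->|H']]; eauto. destruct (IHForall2 H') as [z [? ?]]; eauto. Qed.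
Lemma Forall2_in_r {A B} (R0 : A -> B -> Prop) l1 l2 y : Forall2 R0 l1 l2 -> In y l2 -> exists x, In x l1 /\ R0 x y.
Proof. induction 1; simpl; [intros []|intros [->|H']]; eauto. destruct (IHForall2 H') as [z [? ?]]; eauto. Qed.
Lemma NoDup_app_disj {A} (l1 l2 : list A) x : NoDup (l1 ++ l2) -> In x l1 -> In x l2 -> False.
Proof. induction l1; simpl; intros H Hx H2; [destruct Hx|]. inversion H; subst. destruct Hx as [->|H1]; eauto. apply H3; apply in_or_app; auto. Qed.

Lemma other_k (N n : nat) : (2 <= N)%nat -> exists k, k < N /\ k <> n.
Proof. intros. destruct n; [exists 1|exists 0]; lia. Qed.

Lemma in_operands_X Is n p : In (XLeaf (fst p)) (operands Is n p).
Proof. unfold operands; simpl; auto. Qed.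

Lemma in_operands_A Is n p k : k < length Is -> k <> n -> In (ALeaf k (nth k (fst p) 0) (snd p)) (operands Is n p).
Proof.
  intros. unfold operands; right. apply in_map_iff. exists k; split; [reflexivity|]. apply filter_In; split. apply in_seq; lia.
  apply Bool.negb_true_iff, Nat.eqb_neq; auto.
Qed.

Lemma in_operands_inv Is n p t : In t (operands Is n p) ->
  t = XLeaf (fst p) \/ exists k, t = ALeaf k (nth k (fst p) 0) (snd p).
Proof. unfold operands; simpl. intros [<-|H]; auto. apply in_map_iff in H as [k [<- _]]; eauto. Qed.

Lemma operands_inj Is n p q ts : 2 <= length Is -> n < length Is ->
  Permutation ts (operands Is n p) -> Permutation ts (operands Is n q) -> p = q.
Proof.
  intros HN Hn Hp Hq.
  assert (Hpq : forall t, In t (operands Is n p) -> In t (operands Is n q)).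
  { intros t Ht. apply (Permutation_in _ Hq). apply (Permutation_in _ (Permutation_sym Hp)); auto. }
  destruct p as [i r], q as [i' r'].
  pose proof (Hpq _ (in_operands_X Is n (i, r))) as HX. apply in_operands_inv in HX as [HX|[k HX]]; inversion HX; subst.
  destruct (other_k _ n HN) as [k [Hk Hkn]].
  pose proof (Hpq _ (in_operands_A Is n (i', r) k Hk Hkn)) as HA. apply in_operands_inv in HA as [HA|[k' HA]]; inversion HA; subst; auto.
Qed.

Lemma prodn_pos Is : Forall (fun d => 1 <= d) Is -> 1 <= prodn Is.
Proof. induction 1; simpl; auto. nia. Qed.

Definition goodR (Is : list nat) (n Rk : nat) (w : term) (e : nat * nat) : Prop :=
  summands w <> [] /\ forall t, In t (summands w) -> exists q, In q (points_at Is n Rk (fst e) (snd e)) /\ is_product Is n q t.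

Lemma In_points_at Is n Rk j r q : In q (points_at Is n Rk j r) <-> In q (points Is Rk) /\ nth n (fst q) 0 = j /\ snd q = r.
Proof.
  unfold points_at. rewrite filter_In. rewrite Bool.andb_true_iff, !Nat.eqb_eq. tauto.
Qed.

Lemma segment (Is : list nat) (n Rk M : nat) (P : list instr) f g ms qs P1 P2 P3 st1 ms1 st2 ms2 :
  2 <= length Is -> n < length Is -> 1 <= M ->
  run M (init_fast, init_slow Is n Rk) P = Some (f, g, ms) ->
  Permutation qs (points Is Rk) ->
  Forall2 (fun q m => Permutation m (operands Is n q)) qs ms ->
  (forall j r, j < nth n Is 0 -> r < Rk ->
       exists t, g (AB j r) = Some t /\ sum_of_products Is n (points_at Is n Rk j r) t) ->
  P = P1 ++ P2 ++ P3 ->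
  run M (init_fast, init_slow Is n Rk) P1 = Some (st1, ms1) ->
  run M st1 P2 = Some (st2, ms2) ->
  comm_cost P2 <= M ->
  (INR (length ms2) <= Rpower (INR (3 * M)) (/ INR (length Is)) ^ (length Is - 1) / INR (length Is) * INR (3 * M))%R.
Proof.
  intros HN Hn HM Hrun Hperm Hf2 Hout HP H1 H2 Hc.
  set (N := length Is) in *.
  set (u := Rpower (INR (3 * M)) (/ INR N)).
  assert (H3M : (0 < INR (3 * M))%R) by (apply lt_0_INR; lia).
  destruct (rpow_facts (INR (3 * M)) N H3M ltac:(lia)) as [Hu [HuN _]]. fold u in Hu, HuN.
  pose proof (inv_lemma _ _ _ _ _ _ Hrun (inv_init Is n Rk)) as Hinvf. simpl in Hinvf.
  rewrite HP in Hrun. apply run_app in Hrun as [st1' [ms1' [msR [E1 [E2 E3]]]]].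
  rewrite H1 in E1. inversion E1; subst st1' ms1'.
  apply run_app in E2 as [st2' [ms2' [ms3 [E4 [E5 E6]]]]].
  rewrite H2 in E4. inversion E4; subst st2' ms2'. subst msR ms.
  apply Forall2_app_inv_r in Hf2 as [qs1 [qsR [F1 [FR Eq]]]].
  apply Forall2_app_inv_r in FR as [qs2 [qs3 [F2 [F3 Eq']]]]. subst qs qsR.
  assert (HND : NoDup (qs1 ++ qs2 ++ qs3)) by (eapply Permutation_NoDup; [apply Permutation_sym; eauto|apply NoDup_points]).
  assert (Hb0 : forall s, M <= s -> fst (init_fast, init_slow Is n Rk) s = None) by (intros; reflexivity).
  pose proof (run_fast_bound _ _ _ _ _ H1 Hb0) as Hb1.
  pose proof (run_fast_bound _ _ _ _ _ H2 Hb1) as Hb2.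
  pose proof (inv_lemma _ _ _ _ _ _ H1 (inv_init Is n Rk)) as Hinv1. simpl in Hinv1.
  unfold Inv in Hinvf, Hinv1.
  destruct (load_lemma M P2 st1 st2 ms2 (map (fst st1) (seq 0 M)) H2) as [Lin [_ [HLin1 HLin2]]].
  { intros s u0 Hs _. destruct (Nat.lt_ge_cases s M) as [Hs'|Hs'].
    - rewrite <- Hs. apply in_map, in_seq; lia.
    - rewrite Hb1 in Hs by lia; discriminate. }
  rewrite length_map, length_seq in HLin1.
  destruct (store_lemma M P2 st1 st2 ms2 H2) as [St [HSt1 HSt2]].
  set (Lout := map (fst st2) (seq 0 M) ++ St).
  pose proof (comm_split P2) as Hcs.
  assert (Hcnt : length Lin + length Lout <= 3 * M) by (unfold Lout; rewrite length_app, length_map, length_seq; lia).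
  apply Rle_trans with (u ^ (N - 1) / INR N * INR (length Lin + length Lout))%R.
  2: { apply Rmult_le_compat_l; [|apply le_INR; auto].
       unfold Rdiv; apply Rmult_le_pos; [apply pow_le; lra|left; apply Rinv_0_lt_compat; apply lt_0_INR; lia]. }
  rewrite <- (Forall2_length F2).
  apply (comb_core Is n Rk qs2 Lin Lout (goodR Is n Rk) u); auto.
  - lia.
  - apply NoDup_app_remove_l in HND. apply NoDup_app_remove_r in HND. auto.
  - intros p Hp; apply (Permutation_in _ Hperm); apply in_or_app; right; apply in_or_app; left; auto.
  - intros w [j1 r1] [j2 r2] [Hne1 Hg1] [_ Hg2].
    assert (exists t, In t (summands w)) as [t Ht] by (destruct (summands w); [congruence|eexists; left; eauto]).
    destruct (Hg1 t Ht) as [q1 [Hq1 [ts1 [Et1 Hp1]]]].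
    destruct (Hg2 t Ht) as [q2 [Hq2 [ts2 [Et2 Hp2]]]]. rewrite Et1 in Et2. inversion Et2; subst ts2.
    pose proof (operands_inj Is n q1 q2 ts1 HN Hn Hp1 Hp2). subst q2.
    apply In_points_at in Hq1 as [_ [? ?]]. apply In_points_at in Hq2 as [_ [? ?]]. simpl in *. subst; auto.
  - intros k j r e [Hne Hg]. simpl in Hg. destruct (Hg (ALeaf k j r) (or_introl eq_refl)) as [q [_ [ts [E _]]]]. discriminate.
  - intros p Hp.
    destruct (Forall2_in_l _ _ _ _ F2 Hp) as [ts [Hts Hpts]].
    split; [|split].
    + apply (HLin2 ts Hts). apply (Permutation_in _ (Permutation_sym Hpts)). apply in_operands_X. exact I.
    + intros k Hk Hkn. apply (HLin2 ts Hts). apply (Permutation_in _ (Permutation_sym Hpts)). apply in_operands_A; auto. exact I.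
    + assert (Hpp : In p (points Is Rk)) by (apply (Permutation_in _ Hperm); apply in_or_app; right; apply in_or_app; left; auto).
      pose proof Hpp as Hpp'. apply In_points in Hpp' as [Hit Hr]. apply In_tuples in Hit as [Hlen Hlt].
      destruct (Hout (nth n (fst p) 0) (snd p) (Hlt n Hn) Hr) as [v [Hgv [qs' [Hqs' Hfq]]]].
      assert (Hpa : In p qs') by (apply (Permutation_in _ (Permutation_sym Hqs')); apply In_points_at; auto).
      destruct (Forall2_in_l _ _ _ _ Hfq Hpa) as [t [Ht [ts' [Et Hts']]]]. subst t.
      assert (Hms : In ts' (ms1 ++ ms2 ++ ms3)).
      { apply (Hinvf v ts'); [right; exists (AB (nth n (fst p) 0) (snd p)); auto|auto]. }
      assert (Hn1 : ~ In ts' ms1).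
      { intros Hin. destruct (Forall2_in_r _ _ _ _ F1 Hin) as [q [Hq Hqts]].
        pose proof (operands_inj _ _ _ _ _ HN Hn Hqts Hts') as ->.
        apply (NoDup_app_disj qs1 (qs2 ++ qs3) p HND Hq). apply in_or_app; auto. }
      assert (Hn3 : ~ In ts' ms3).
      { intros Hin. destruct (Forall2_in_r _ _ _ _ F3 Hin) as [q [Hq Hqts]].
        pose proof (operands_inj _ _ _ _ _ HN Hn Hqts Hts') as ->.
        apply NoDup_app_remove_l in HND. apply (NoDup_app_disj qs2 qs3 p HND Hp Hq). }
      destruct (back_lemma M P3 st2 (f, g) ms3 (TMul ts') E5) with (v := v) as [w [Hw [HTw Hiw]]].
      { intros vs E Hin. inversion E; subst; auto. }
      { right; exists (AB (nth n (fst p) 0) (snd p)); auto. }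
      { simpl; auto. }
      exists w. split.
      * destruct Hw as [[s Hs]|[a Ha]].
        -- unfold Lout; apply in_or_app; left. destruct (Nat.lt_ge_cases s M).
           ++ rewrite <- Hs; apply in_map, in_seq; lia.
           ++ rewrite Hb2 in Hs by lia; discriminate.
        -- destruct (HSt2 a w Ha) as [Ha1|Ha1].
           ++ exfalso; apply Hn1. apply (Hinv1 w ts'); [right; eauto|auto].
           ++ unfold Lout; apply in_or_app; right; auto.
      * split.
        -- intro E; rewrite E in HTw; destruct HTw.
        -- intros t0 Ht0. apply Hiw in Ht0. destruct (Forall2_in_r _ _ _ _ Hfq Ht0) as [q [Hq Hqt]].
           exists q; split; auto. simpl. apply (Permutation_in _ Hqs'); auto.
  - change (length Is) with N. rewrite HuN. apply le_INR; lia.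
Qed.

Lemma split_prefix (l : list instr) : forall m, m <= comm_cost l -> exists Q Q', l = Q ++ Q' /\ comm_cost Q = m.
Proof.
  induction l as [|c l IH]; intros m Hm.
  - exists [], []; split; auto. unfold comm_cost in *; simpl in *; lia.
  - destruct m as [|m]. { exists [], (c :: l); auto. }
    unfold comm_cost in Hm; simpl in Hm. destruct (is_comm c) eqn:Ec; simpl in Hm.
    + destruct (IH m ltac:(unfold comm_cost; lia)) as [Q [Q' [-> HQ]]].
      exists (c :: Q), Q'; split; auto. unfold comm_cost in *; simpl; rewrite Ec; simpl; lia.
    + destruct (IH (S m) ltac:(unfold comm_cost; lia)) as [Q [Q' [-> HQ]]].
      exists (c :: Q), Q'; split; auto. unfold comm_cost in *; simpl; rewrite Ec; simpl; lia.
Qed.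

Lemma run_app_inv M st P1 P2 st' st'' ms1 ms2 :
  run M st P1 = Some (st', ms1) -> run M st' P2 = Some (st'', ms2) -> run M st (P1 ++ P2) = Some (st'', ms1 ++ ms2).
Proof.
  revert st ms1; induction P1 as [|c P1 IH]; simpl; intros st ms1 H1 H2.
  - inversion H1; subst; auto.
  - destruct (step M st c) as [[st1 om]|]; [|discriminate].
    destruct (run M st1 P1) as [[st2 ms3]|] eqn:E; [|discriminate]. inversion H1; subst.
    rewrite (IH _ _ E H2). destruct om; auto.
Qed.

Lemma global (Is : list nat) (n Rk M : nat) (P : list instr) f g ms qs (Fb : R) :
  2 <= length Is -> n < length Is -> 1 <= M ->
  run M (init_fast, init_slow Is n Rk) P = Some (f, g, ms) ->
  Permutation qs (points Is Rk) ->
  Forall2 (fun q m => Permutation m (operands Is n q)) qs ms ->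
  (forall j r, j < nth n Is 0 -> r < Rk ->
       exists t, g (AB j r) = Some t /\ sum_of_products Is n (points_at Is n Rk j r) t) ->
  Fb = (Rpower (INR (3 * M)) (/ INR (length Is)) ^ (length Is - 1) / INR (length Is) * INR (3 * M))%R ->
  forall c P2 P1 P3 st1 ms1 st2 ms2, comm_cost P2 = c ->
  P = P1 ++ P2 ++ P3 ->
  run M (init_fast, init_slow Is n Rk) P1 = Some (st1, ms1) ->
  run M st1 P2 = Some (st2, ms2) ->
  (INR (length ms2) * INR M <= Fb * (INR (comm_cost P2) + INR M))%R.
Proof.
  intros HN Hn HM Hrun Hperm Hf2 Hout HFb.
  assert (HF0 : (0 <= Fb)%R).
  { rewrite HFb. apply Rmult_le_pos; [|apply pos_INR]. unfold Rdiv; apply Rmult_le_pos.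
    apply pow_le. unfold Rpower; left; apply exp_pos. left; apply Rinv_0_lt_compat, lt_0_INR; lia. }
  intros c. induction c as [c IH] using lt_wf_ind. intros P2 P1 P3 st1 ms1 st2 ms2 Hc HP H1 H2.
  destruct (Nat.le_gt_cases (comm_cost P2) M) as [Hle|Hgt].
  - pose proof (segment Is n Rk M P f g ms qs P1 P2 P3 st1 ms1 st2 ms2 HN Hn HM Hrun Hperm Hf2 Hout HP H1 H2 Hle) as Hs.
    rewrite <- HFb in Hs. pose proof (pos_INR (comm_cost P2)). pose proof (pos_INR M).
    apply Rle_trans with (Fb * INR M)%R. apply Rmult_le_compat_r; auto.
    apply Rmult_le_compat_l; lra.
  - destruct (split_prefix P2 M ltac:(lia)) as [Q [Q' [EQ HQ]]]. subst P2.
    apply run_app in H2 as [stQ [msQ [msQ' [HQ1 [HQ2 Ems]]]]]. subst ms2.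
    rewrite comm_cost_app in *.
    assert (HsQ := segment Is n Rk M P f g ms qs P1 Q (Q' ++ P3) st1 ms1 stQ msQ HN Hn HM Hrun Hperm Hf2 Hout
             ltac:(rewrite HP, <- !app_assoc; reflexivity) H1 HQ1 ltac:(lia)).
    rewrite <- HFb in HsQ.
    assert (HIH := IH (comm_cost Q') ltac:(lia) Q' (P1 ++ Q) P3 stQ (ms1 ++ msQ) st2 msQ' eq_refl
                 ltac:(rewrite HP, <- !app_assoc; reflexivity) (run_app_inv _ _ _ _ _ _ _ _ H1 HQ1) HQ2).
    rewrite length_app, plus_INR, plus_INR, HQ.
    pose proof (pos_INR M).
    assert (INR (length msQ) * INR M <= Fb * INR M)%R by (apply Rmult_le_compat_r; auto).
    nra.
Qed.

Theorem theorem1 (Is : list nat) (n Rk M : nat) (P : list instr) :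
  2 <= length Is ->
  Forall (fun d => 1 <= d) Is ->
  1 <= Rk ->
  n < length Is ->
  is_mttkrp_alg Is n Rk M P ->
  (/ Rpower 3 (2 - / INR (length Is))
     * (INR (length Is) * INR (prodn Is) * INR Rk)
     / Rpower (INR M) (1 - / INR (length Is))
   - INR M <= INR (comm_cost P))%R.
Proof.
  intros HN HIs HR Hn [f [g [ms [Hrun [[qs [Hperm Hf2]] Hout]]]]].
  pose proof (prodn_pos Is HIs) as HI.
  assert (Hlen : length ms = prodn Is * Rk).
  { rewrite <- (Forall2_length Hf2), (Permutation_length Hperm). apply length_points. }
  assert (HM : 1 <= M).
  { destruct M; [|lia]. apply run_M0 in Hrun. subst ms. simpl in Hlen. nia. }
  set (N := length Is) in *.
  set (Fb := (Rpower (INR (3 * M)) (/ INR N) ^ (N - 1) / INR N * INR (3 * M))%R).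
  pose proof (global Is n Rk M P f g ms qs Fb HN Hn HM Hrun Hperm Hf2 Hout eq_refl
                (comm_cost P) P [] [] _ [] _ ms eq_refl ltac:(rewrite app_nil_r; reflexivity) eq_refl Hrun) as HG.
  rewrite Hlen, mult_INR in HG.
  assert (HMr : (0 < INR M)%R) by (apply lt_0_INR; lia).
  assert (HNr : (0 < INR N)%R) by (apply lt_0_INR; lia).
  assert (H3M : (0 < INR (3 * M))%R) by (apply lt_0_INR; lia).
  destruct (rpow_facts (INR (3 * M)) N H3M ltac:(lia)) as [_ [_ [Hf1 _]]].
  unfold Fb in HG. rewrite <- Hf1 in HG.
  rewrite mult_INR in HG. simpl (INR 3) in HG.
  rewrite <- Rpower_mult_distr in HG by lra.
  set (a := Rpower (1 + 1 + 1) (1 - / INR N)) in *.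
  set (b := Rpower (INR M) (1 - / INR N)) in *.
  assert (Ha : (0 < a)%R) by (unfold a, Rpower; apply exp_pos).
  assert (Hb : (0 < b)%R) by (unfold b, Rpower; apply exp_pos).
  assert (E3 : Rpower 3 (2 - / INR N) = (3 * a)%R).
  { replace (2 - / INR N)%R with (1 + (1 - / INR N))%R by ring. rewrite Rpower_plus, Rpower_1 by lra.
    unfold a. replace (1 + 1 + 1)%R with 3%R by ring. auto. }
  rewrite E3.
  set (I := INR (prodn Is)) in *. set (R0 := INR Rk) in *. set (C := INR (comm_cost P)) in *.
  assert (HI0 : (0 <= I)%R) by apply pos_INR. assert (HR0 : (0 <= R0)%R) by apply pos_INR.
  assert (Hgoal : (INR N * I * R0 / (3 * a * b) <= C + INR M)%R).
  { apply (Rmult_le_reg_r (3 * a * b * INR M / INR N)).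
    { apply Rmult_lt_0_compat; [|apply Rinv_0_lt_compat; auto]. repeat apply Rmult_lt_0_compat; lra. }
    replace (INR N * I * R0 / (3 * a * b) * (3 * a * b * INR M / INR N))%R with (I * R0 * INR M)%R
      by (field; repeat split; lra).
    replace ((C + INR M) * (3 * a * b * INR M / INR N))%R with (a * b / INR N * ((1 + 1 + 1) * INR M) * (C + INR M))%R
      by (field; lra).
    exact HG. }
  replace (/ (3 * a) * (INR N * I * R0) / b)%R with (INR N * I * R0 / (3 * a * b))%R by (field; repeat split; lra).
  lra.
Qed.
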